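(* Let $\varepsilon\in(0,2)$. For all sufficiently large $n$ (depending on $\varepsilon$) there exists an approximately convex set $A\subseteq\ell_1^n$ such that $$\mathcal{H}(A,\operatorname{Co}(A))\ge\log_2 n-\varepsilon\qquad\text{and}\qquad\operatorname{diam}(A)\le\Bigl(\frac{8}{\varepsilon}+1\Bigr)\log_2 n.$$
   Context: $\ell_1^n$ is $\mathbb{R}^n$ with the norm $\sum|a_i|$. A set $A$ is approximately convex if $d(tx+(1-t)y,A)\le1$ for all $x,y\in A$, $t\in[0,1]$, where $d(x,A)=\inf_{a\in A}\|x-a\|$. $\mathcal{H}$ is the Hausdorff distance, $\operatorname{Co}$ the convex hull, $\operatorname{diam}(A)=\sup\{\|x-y\|:x,y\in A\}$. *)

(* Defs.v *)
From HB Require Import structures.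
From mathcomp Require Import all_boot all_order all_algebra.
From mathcomp Require Import all_classical all_reals all_analysis.
Set Implicit Arguments. Unset Strict Implicit. Unset Printing Implicit Defensive.
Import Order.TTheory GRing.Theory Num.Theory.
Local Open Scope classical_set_scope.
Local Open Scope ring_scope.

Section Defs.
Variables (R : realType) (n : nat).
Local Notation V := 'rV[R]_n.

Definition norm1 (x : V) : R := \sum_(i < n) `|x ord0 i|.

(* d(x,A) = inf_{a in A} ||x - a||_1, in extended reals (+oo if A empty) *)
Definition dist1 (x : V) (A : set V) : \bar R :=
  ereal_inf [set (norm1 (x - a))%:E | a in A].

Definition approx_convex (A : set V) : Prop :=
  forall x y t, A x -> A y -> 0 <= t <= 1 ->
    (dist1 (t *: x + (1 - t) *: y) A <= 1%:E)%E.

Definition conv_hull (A : set V) : set V :=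
  [set x | exists m (w : 'I_m -> R) (p : 'I_m -> V),
     (forall i, 0 <= w i) /\ \sum_(i < m) w i = 1 /\
     (forall i, A (p i)) /\ x = \sum_(i < m) w i *: p i].

Definition hausdorff1 (A B : set V) : \bar R :=
  Order.max (ereal_sup [set dist1 a B | a in A])
            (ereal_sup [set dist1 b A | b in B]).

Definition diam1 (A : set V) : \bar R :=
  ereal_sup [set e | exists x y, A x /\ A y /\ e = (norm1 (x - y))%:E].

End Defs.

Definition log2 {R : realType} (x : R) : R := ln x / ln 2.

(* Main.v *)
Require Import Defs.
From HB Require Import structures.
From mathcomp Require Import all_boot all_order all_algebra.
From mathcomp Require Import all_classical all_reals all_analysis.
From mathcomp Require Import ring lra.
Import Order.TTheory GRing.Theory Num.Theory.
Local Open Scope classical_set_scope.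
Local Open Scope ring_scope.

Lemma arith_lower (R : realType) (l2 eps L m P E : R) :
  1/2 <= l2 -> 0 < eps -> eps < 2 -> 0 <= L -> 0 < m -> 0 <= P ->
  m <= L * (1 + 2 / eps) + 2 ->
  E <= (L * (1 + 2 / eps) + 2 - m) * m * l2 ->
  m * (L * l2) - (L * (1 + 2 / eps) + 2 - m) - (L * l2 + 1) * P <= E ->
  L - eps <= (L * (1 + 2 / eps) + 2 - m) + 2 * P.
Proof.
move=> l2h e0 e2 L0 m0 P0 mK E1 E2.
have [h|h] := leP (L - eps) (L * (1 + 2 / eps) + 2 - m); first by lra.
have em : eps * m >= 2 * L + 2 * eps.
  have : eps * (L * (1 + 2 / eps) + 2) = eps * L + 2 * L + 2 * eps by field; rewrite gt_eqF.
  have : eps * (L * (1 + 2 / eps) + 2 - m) <= eps * (L - eps) by rewrite ler_pM2l // ltW.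
  nra.
move: E1 E2 h; set d := L * (1 + 2 / eps) + 2 - m => E1 E2 h.
have mL : m >= L + 2 by nra.
have l2p : 0 < l2 by lra.
have A1 : L <= eps * m * l2 by nra.
have B1 : L * l2 + 1 <= 2 * m * l2 by nra.
have A2 : (L * l2 + 1) * P <= 2 * m * l2 * P by apply: ler_wpM2r.
have A3 : m * (L * l2) <= d * m * l2 + d + 2 * m * l2 * P by lra.
have A4 : (L - eps) * (m * l2) <= (d + 2 * P) * (m * l2) by nra.
have mp : 0 < m * l2 by nra.
by rewrite -(ler_pM2r mp).
Qed.

Section Ent.
Variables (R : realType) (n : nat).
Implicit Types (x y : 'I_n -> R).

Definition mass x : R := \sum_i x i.
Definition ent x : R := \sum_i x i * ln (mass x / x i).
Definition Hn x : R := ent x / (mass x * ln 2).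

Lemma ln2_gt0 : 0 < ln (2:R).
Proof. by apply: ln_gt0; rewrite ltr1n. Qed.

Lemma ln_le_sub1 (z : R) : 0 < z -> ln z <= z - 1.
Proof.
move=> z0; have h := @le_ln1Dx R (z - 1).
have e : 1 + (z - 1) = z by rewrite addrCA subrr addr0.
rewrite e in h; apply: h; rewrite ltrBrDl; lra.
Qed.

Lemma ln2_ge_half : 1/2 <= ln (2:R).
Proof.
have p : 0 < (2:R)^-1 by rewrite invr_gt0.
have := @ln_le_sub1 (2^-1) p.
rewrite lnV ?posrE // => h; lra.
Qed.

Lemma le_mass x i : (forall j, 0 <= x j) -> x i <= mass x.
Proof.
move=> x0; rewrite /mass (bigD1 i) //= lerDl; exact: sumr_ge0.
Qed.

Lemma mass_ge0 x : (forall j, 0 <= x j) -> 0 <= mass x.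
Proof. by move=> x0; apply: sumr_ge0. Qed.

Lemma ent_ge0 x : (forall j, 0 <= x j) -> 0 <= ent x.
Proof.
move=> x0; apply: sumr_ge0 => i _.
have [->|xi0] := eqVneq (x i) 0; first by rewrite mul0r.
have xp : 0 < x i by rewrite lt_def xi0 x0.
apply: mulr_ge0 => //; apply: ln_ge0.
by rewrite ler_pdivlMr // mul1r le_mass.
Qed.

Lemma Hn_ge0 x : (forall j, 0 <= x j) -> 0 <= Hn x.
Proof.
move=> x0; apply: divr_ge0; first exact: ent_ge0.
by apply: mulr_ge0; [exact: mass_ge0| exact: ltW ln2_gt0].
Qed.

Lemma mass_scale (t : R) x : mass (fun i => t * x i) = t * mass x.
Proof. by rewrite /mass mulr_sumr. Qed.

Lemma ent_scale (t : R) x : 0 <= t -> ent (fun i => t * x i) = t * ent x.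
Proof.
move=> t0; rewrite /ent mass_scale mulr_sumr; apply: eq_bigr => i _.
have [->|tn0] := eqVneq t 0; first by rewrite !mul0r.
by rewrite -mulf_div divff // mul1r mulrA.
Qed.

Lemma Hn_scale (t : R) x : 0 < t -> Hn (fun i => t * x i) = Hn x.
Proof.
move=> t0; rewrite /Hn ent_scale ?ltW // mass_scale.
have l2 := @ln2_gt0.
have [->|m0] := eqVneq (mass x) 0; first by rewrite !(mulr0, mul0r, invr0).
by field; rewrite m0 !gt_eqF.
Qed.

Lemma ent_mass0 x : mass x = 0 -> ent x = 0.
Proof. by move=> m0; rewrite /ent m0; apply: big1 => i _; rewrite mul0r ln0 ?mulr0. Qed.

Lemma binent (A B : R) : 0 <= A -> 0 <= B ->
  A * ln ((A + B) / A) + B * ln ((A + B) / B) <= (A + B) * ln 2.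
Proof.
move=> A0 B0.
have l2 := ln2_gt0.
have [->|An0] := eqVneq A 0.
  rewrite mul0r !add0r.
  have [->|Bn0] := eqVneq B 0; first by rewrite !mul0r.
  by rewrite divff // ln1 mulr0 mulr_ge0 // ltW.
have [->|Bn0] := eqVneq B 0.
  by rewrite mul0r !addr0 divff // ln1 mulr0 mulr_ge0 // ltW.
have Ap : 0 < A by rewrite lt_def An0 A0.
have Bp : 0 < B by rewrite lt_def Bn0 B0.
have key (U V : R) : 0 < U -> 0 < V -> U * ln ((U + V) / U) <= U * ln 2 + (U + V) / 2 - U.
  move=> Up Vp.
  have e : (U + V) / U = 2 * ((U + V) / (2 * U)) by field; rewrite ?gt_eqF.
  have pos : 0 < (U + V) / (2 * U) by rewrite divr_gt0 // ?addr_gt0 // mulr_gt0.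
  rewrite e lnM ?posrE // mulrDr -addrA lerD2l.
  have h := @ln_le_sub1 _ pos.
  have : U * ln ((U + V) / (2 * U)) <= U * ((U + V) / (2 * U) - 1) by rewrite ler_pM2l.
  move=> h2; apply: (le_trans h2); rewrite mulrBr mulr1 lerD2r.
  by rewrite le_eqVlt; apply/orP; left; apply/eqP; field; rewrite gt_eqF.
have := key A B Ap Bp; have := key B A Bp Ap; rewrite (addrC B A) => h1 h2.
have := lerD h2 h1. move=> h; apply: (le_trans h).
by rewrite le_eqVlt; apply/orP; left; apply/eqP; field.
Qed.


Lemma term_bound (u v U M : R) : 0 <= u -> 0 <= v -> u <= U -> U <= M ->
  u * ln (M / (u + v)) <= u * ln (U / u) + u * ln (M / U).
Proof.
move=> u0 v0 uU UM.
have [->|un0] := eqVneq u 0; first by rewrite !mul0r addr0.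
have up : 0 < u by rewrite lt_def un0 u0.
have Up : 0 < U by apply: lt_le_trans uU.
have Mp : 0 < M by apply: lt_le_trans UM.
rewrite -mulrDr ler_pM2l // -lnM ?posrE ?divr_gt0 //.
have -> : U / u * (M / U) = M / u by field; rewrite !gt_eqF.
have uvp : 0 < u + v by lra.
rewrite ler_ln ?posrE ?divr_gt0 //.
by rewrite ler_pM2l // lef_pV2 ?posrE // lerDl.
Qed.

Lemma ent_mix x y : (forall i, 0 <= x i) -> (forall i, 0 <= y i) ->
  ent (fun i => x i + y i) <= ent x + ent y + (mass x + mass y) * ln 2.
Proof.
move=> x0 y0.
have mxy : mass (fun i => x i + y i) = mass x + mass y by rewrite /mass big_split.
have mx0 := mass_ge0 _ x0; have my0 := mass_ge0 _ y0.
apply: (@le_trans _ _ (ent x + ent y + (mass x * ln ((mass x + mass y) / mass x)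
   + mass y * ln ((mass x + mass y) / mass y)))); last first.
  by rewrite lerD2l binent.
have ex : mass x * ln ((mass x + mass y) / mass x) =
   \sum_i x i * ln ((mass x + mass y) / mass x) by rewrite -mulr_suml.
have ey : mass y * ln ((mass x + mass y) / mass y) =
   \sum_i y i * ln ((mass x + mass y) / mass y) by rewrite -mulr_suml.
rewrite ex ey /ent mxy.
rewrite addrACA -!big_split /=; apply: ler_sum => i _.
rewrite mulrDl.
have l1 : mass x <= mass x + mass y by lra.
have l2 : mass y <= mass y + mass x by lra.
have h1 := @term_bound _ _ _ _ (x0 i) (y0 i) (le_mass _ i x0) l1.
have h2 := @term_bound _ _ _ _ (y0 i) (x0 i) (le_mass _ i y0) l2.
rewrite (addrC (mass y)) in h2.
rewrite (addrC (y i) (x i)) in h2.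
have ms : \sum_(i0 < n) (x i0 + y i0) = mass x + mass y by rewrite big_split.
rewrite ms; exact: lerD.
Qed.

Lemma coord_bound (x m c N : R) : 0 <= x -> x <= m -> 0 < c -> m <= c * N -> 1 <= N ->
  x * ln (m / c) - (ln N + 1) * Num.max (x - c) 0 <= x * ln (m / x).
Proof.
move=> x0 xm c0 mcN N1.
have lN : 0 <= ln N by apply: ln_ge0.
have [->|xn0] := eqVneq x 0.
  rewrite !mul0r sub0r max_r ?mulr0 ?subr0 // sub0r oppr_le0 ltW //.

have xp : 0 < x by rewrite lt_def xn0 x0.
have mp : 0 < m by apply: lt_le_trans xm.
have e : ln (m / c) = ln (m / x) + ln (x / c).
  by rewrite -lnM ?posrE ?divr_gt0 //; congr ln; field; rewrite !gt_eqF.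
rewrite e mulrDr lerBlDr lerD2l.
have [xc|cx] := leP x c.
  rewrite max_r ?subr_le0 // mulr0.
  rewrite pmulr_rle0 // ln_le0 // ler_pdivrMr // mul1r //.
rewrite max_l; last by rewrite subr_ge0 ltW.
have lxc : ln (x / c) <= ln N.
  rewrite ler_ln ?posrE ?divr_gt0 ?(lt_le_trans ltr01 N1) //.
  by rewrite ler_pdivrMr // mulrC; apply: le_trans xm mcN.
have lxc2 : ln (x / c) <= x / c - 1 by apply: ln_le_sub1; rewrite divr_gt0.
have -> : x * ln (x / c) = (x - c) * ln (x / c) + c * ln (x / c) by rewrite -mulrDl subrK.
rewrite (mulrDl (ln N) 1) mul1r (mulrC (ln N)); apply: lerD.
  by rewrite ler_pM2l ?subr_gt0.
have : c * ln (x / c) <= c * (x / c - 1) by rewrite ler_pM2l.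
move=> h; apply: (le_trans h); rewrite le_eqVlt; apply/orP; left; apply/eqP; field.
by rewrite gt_eqF.
Qed.

Lemma ent_lower x (K : R) : (0 < n)%N -> 0 < K -> (forall i, 0 <= x i) ->
  0 < mass x -> mass x <= K ->
  mass x * ln n%:R - (K - mass x)
    - (ln n%:R + 1) * \sum_i Num.max (x i - K / n%:R) 0 <= ent x.
Proof.
move=> n0 K0 x0 m0 mK.
have np : 0 < (n%:R : R) by rewrite ltr0n.
have c0 : 0 < K / n%:R by rewrite divr_gt0.
have hs : mass x * ln (mass x / (K / n%:R))
    - (ln n%:R + 1) * \sum_i Num.max (x i - K / n%:R) 0 <= ent x.
  have -> : mass x * ln (mass x / (K / n%:R)) = \sum_i x i * ln (mass x / (K / n%:R))
    by rewrite -mulr_suml.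
  rewrite mulr_sumr -sumrB; apply: ler_sum => i _.
  apply: coord_bound => //; first exact: le_mass.
    rewrite mulrAC -mulrA divff ?gt_eqF // mulr1 //.
  by rewrite ler1n.
apply: le_trans hs; rewrite lerD2r.
have -> : mass x / (K / n%:R) = n%:R * (mass x / K) by field; rewrite !gt_eqF.
rewrite lnM ?posrE ?divr_gt0 // mulrDr.
rewrite lerD2l.
have h := @ln_le_sub1 (K / mass x) (divr_gt0 K0 m0).
have -> : mass x / K = (K / mass x)^-1 by rewrite invf_div.
rewrite lnV ?posrE ?divr_gt0 //.
have : mass x * (K / mass x - 1) = K - mass x by field; rewrite gt_eqF.
move=> e; rewrite -e mulrN lerN2 ler_pM2l //.
Qed.

Lemma ent_fromA x K : (forall i, 0 <= x i) -> mass x + Hn x <= K ->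
  ent x <= (K - mass x) * mass x * ln 2.
Proof.
move=> x0 h.
have l2 := ln2_gt0.
have [m0|mn0] := eqVneq (mass x) 0; first by rewrite ent_mass0 // m0 !(mulr0, mul0r).
have mp : 0 < mass x by rewrite lt_def mn0 mass_ge0.
have e : ent x = Hn x * (mass x * ln 2) by rewrite /Hn divfK // mulf_neq0 // gt_eqF.
rewrite e -mulrA ler_pM2r ?mulr_gt0 //; lra.
Qed.

Lemma abs_split x (c : R) :
  \sum_i `|c - x i| = (c *+ n - mass x) + 2 * \sum_i Num.max (x i - c) 0.
Proof.
have -> : c *+ n = \sum_(i < n) c by rewrite sumr_const card_ord.
rewrite /mass -sumrB mulr_sumr -big_split /=; apply: eq_bigr => i _.
have [h|h] := leP (x i) c.
  by rewrite max_r ?subr_le0 // mulr0 addr0 ger0_norm // subr_ge0.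
rewrite max_l; last by rewrite subr_ge0 ltW.
rewrite ler0_norm; last by rewrite subr_le0 ltW.
lra.
Qed.

Definition co (v : 'rV[R]_n) : 'I_n -> R := fun i => v ord0 i.

Definition Aset (K : R) : set 'rV[R]_n :=
  [set v : 'rV[R]_n | (forall i, 0 <= v ord0 i) /\ mass (co v) + Hn (co v) <= K].

Lemma Aset0 K : 0 <= K -> Aset K 0.
Proof.
move=> K0; split; first by move=> i; rewrite mxE.
have m0 : mass (co 0) = 0 by rewrite /mass /co; apply: big1 => i _; rewrite mxE.
by rewrite /Hn m0 !mul0r invr0 mulr0 addr0.
Qed.

Lemma shrink K (z : 'rV[R]_n) : 0 <= K -> (forall i, 0 <= z ord0 i) ->
  mass (co z) + Hn (co z) <= K + 1 -> (dist1 z (Aset K) <= 1%:E)%E.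
Proof.
move=> K0 z0 hz.
have cz0 : forall i, 0 <= co z i by [].
have h0 := Hn_ge0 _ cz0; have m0 := mass_ge0 _ cz0.
rewrite /dist1; apply: ge_ereal_inf.
have [hK|hK] := leP (mass (co z) + Hn (co z)) K.
  exists 0%:E; last by rewrite lee_fin.
  exists z; first by split.
  rewrite subrr /norm1; congr EFin; apply: big1 => i _; by rewrite mxE normr0.
have [hm|hm] := leP (mass (co z)) 1.
  exists (mass (co z))%:E; last by rewrite lee_fin.
  exists 0; first exact: Aset0.
  rewrite subr0 /norm1 /mass; congr EFin; apply: eq_bigr => i _; by rewrite ger0_norm.
set M := mass (co z) in hK hm hz m0 *.
set h := Hn (co z) in hK hz h0 *.
have Mp : 0 < M by lra.
set lam := (K - h) / M.
have lp : 0 < lam by rewrite divr_gt0 //; lra.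
have l1 : lam < 1 by rewrite ltr_pdivrMr // mul1r; lra.
have cw : co (lam *: z) = fun i => lam * co z i by apply: funext => i; rewrite /co mxE.
exists (M - (K - h))%:E; last by rewrite lee_fin; lra.
exists (lam *: z).
  split; first by move=> i; rewrite mxE mulr_ge0 // ltW.
  rewrite cw mass_scale Hn_scale // -/M -/h /lam divfK ?gt_eqF //; lra.
congr EFin; rewrite /norm1.
have -> : M - (K - h) = \sum_i (1 - lam) * co z i.
  rewrite -mulr_sumr -/(mass (co z)) -/M /lam mulrBl mul1r divfK ?gt_eqF //.
apply: eq_bigr => i _; rewrite !mxE ger0_norm.
  by rewrite /co mulrBl mul1r.
by rewrite -[X in X - _]mul1r -mulrBl mulr_ge0 // subr_ge0 ltW.
Qed.

Lemma Aset_approx K : 0 <= K -> approx_convex (Aset K).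
Proof.
move=> K0 x y t [x0 hx] [y0 hy] /andP[t0 t1].
set z := t *: x + (1 - t) *: y.
have t1' : 0 <= 1 - t by rewrite subr_ge0.
have cz : co z = fun i => t * co x i + (1 - t) * co y i.
  by apply: funext => i; rewrite /co /z !mxE.
apply: shrink => //.
  by move=> i; rewrite /z !mxE addr_ge0 // mulr_ge0.
have l2 := ln2_gt0.
have ex := ent_fromA (co x) K x0 hx; have ey := ent_fromA (co y) K y0 hy.
have mx0 := mass_ge0 (co x) x0; have my0 := mass_ge0 (co y) y0.
have ax0 : forall i, 0 <= t * co x i by move=> i; exact: mulr_ge0 t0 (x0 i).
have ay0 : forall i, 0 <= (1 - t) * co y i by move=> i; exact: mulr_ge0 t1' (y0 i).
have hm := ent_mix _ _ ax0 ay0.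
rewrite !ent_scale // !mass_scale -cz in hm.
have mz : mass (co z) = t * mass (co x) + (1 - t) * mass (co y).
  by rewrite cz /mass big_split /= -!mulr_sumr.
set mX := mass (co x) in ex mx0 hm mz *.
set mY := mass (co y) in ey my0 hm mz *.
have [M0|Mn0] := eqVneq (mass (co z)) 0.
  by rewrite /Hn M0 !mul0r invr0 mulr0 add0r; lra.
have Mp : 0 < mass (co z) by rewrite lt_def Mn0 mass_ge0 // => i; rewrite cz addr_ge0.
rewrite -lerBrDl /Hn ler_pdivrMr ?mulr_gt0 //.
rewrite mz in Mp *.
set M := t * mX + (1 - t) * mY in Mp hm *.
have jen : M * M <= t * (mX * mX) + (1 - t) * (mY * mY).
  have : t * (mX * mX) + (1 - t) * (mY * mY) - M * M = t * (1 - t) * ((mX - mY) * (mX - mY))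
    by rewrite /M; ring.
  move=> e; rewrite -subr_ge0 e; apply: mulr_ge0; [exact: mulr_ge0|].
  by rewrite -expr2 sqr_ge0.
apply: (le_trans hm).
have e1 : t * ent (co x) <= t * ((K - mX) * mX * ln 2) by rewrite ler_wpM2l.
have e2 : (1 - t) * ent (co y) <= (1 - t) * ((K - mY) * mY * ln 2) by rewrite ler_wpM2l.
have : t * ((K - mX) * mX * ln 2) + (1 - t) * ((K - mY) * mY * ln 2) + M * ln 2
   <= (K + 1 - M) * (M * ln 2).
  have : (K + 1 - M) * (M * ln 2) - (t * ((K - mX) * mX * ln 2) + (1 - t) * ((K - mY) * mY * ln 2) + M * ln 2)
     = ln 2 * (t * (mX * mX) + (1 - t) * (mY * mY) - M * M) by rewrite /M; ring.
  move=> e; rewrite -subr_ge0 e mulr_ge0 ?subr_ge0 // ltW //.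
lra.
Qed.

Definition pt (K : R) (i : 'I_n) : 'rV[R]_n := \row_j (if j == i then K else 0).
Definition ctr (K : R) : 'rV[R]_n := \sum_(i < n) n%:R^-1 *: pt K i.

Lemma pt_in K i : 0 <= K -> Aset K (pt K i).
Proof.
move=> K0; split; first by move=> j; rewrite mxE; case: (j == i).
have cp : co (pt K i) = fun j => if j == i then K else 0 by apply: funext => j; rewrite /co mxE.
have m : mass (co (pt K i)) = K.
  by rewrite cp /mass (bigD1 i) //= eqxx big1 ?addr0 // => j /negbTE ->.
have e : ent (co (pt K i)) = 0.
  rewrite /ent m cp; apply: big1 => j _; case: (j == i); last by rewrite mul0r.
  have [->|Kn0] := eqVneq K 0; first by rewrite mul0r.
  by rewrite divff // ln1 mulr0.
by rewrite /Hn e mul0r addr0 m.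
Qed.

Lemma ctr_coord K j : (0 < n)%N -> ctr K ord0 j = K / n%:R.
Proof.
move=> n0; rewrite /ctr summxE (bigD1 j) //= big1 ?addr0.
  by rewrite !mxE eqxx mulrC.
by move=> i /negbTE ij; rewrite !mxE eq_sym ij mulr0.
Qed.

Lemma ctr_hull K : (0 < n)%N -> 0 <= K -> conv_hull (Aset K) (ctr K).
Proof.
move=> n0 K0; exists n, (fun _ => n%:R^-1), (pt K).
split; first by move=> i; rewrite invr_ge0 ler0n.
split. rewrite sumr_const card_ord. have -> : (n%:R : R)^-1 *+ n = n%:R^-1 * n%:R by rewrite mulr_natr. by rewrite mulVf // pnatr_eq0 -lt0n.
split; first by move=> i; exact: pt_in.
by [].
Qed.

Lemma far (eps : R) a : 0 < eps -> eps < 2 -> (0 < n)%N ->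
  Aset ((ln n%:R / ln 2) * (1 + 2 / eps) + 2) a ->
  ln n%:R / ln 2 - eps <= norm1 (ctr ((ln n%:R / ln 2) * (1 + 2 / eps) + 2) - a).
Proof.
move=> e0 e2 n0 [a0 ha].
set L := ln n%:R / ln 2.
have l2 := ln2_gt0.
have L0 : 0 <= L by apply: divr_ge0; [apply: ln_ge0; rewrite ler1n | exact: ltW].
set K := L * (1 + 2 / eps) + 2 in ha *.
have K0 : 0 < K by rewrite /K ltr_wpDl // mulr_ge0 // addr_ge0 // divr_ge0 // ltW.
have np : 0 < (n%:R : R) by rewrite ltr0n.
have nrm : norm1 (ctr K - a) = \sum_i `|K / n%:R - co a i|.
  by rewrite /norm1; apply: eq_bigr => i _; rewrite !mxE ctr_coord.
rewrite nrm abs_split.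
have -> : K / n%:R *+ n = K by rewrite -mulr_natr divfK // gt_eqF.
have P0 : 0 <= \sum_i Num.max (co a i - K / n%:R) 0.
  by apply: sumr_ge0 => i _; rewrite le_max lexx orbT.
have h0 := Hn_ge0 (co a) a0; have m0 := mass_ge0 (co a) a0.
have [M0|Mn0] := eqVneq (mass (co a)) 0.
  have : 0 <= L * (2 / eps) by rewrite mulr_ge0 // divr_ge0 // ltW.
  move=> h; have LK : L <= K by rewrite /K mulrDr mulr1; lra.
  rewrite M0 subr0; lra.
have mp : 0 < mass (co a) by rewrite lt_def Mn0 m0.
have mK : mass (co a) <= K by lra.
apply: (@arith_lower R (ln 2) eps L (mass (co a)) _ (ent (co a))) => //.
- exact: ln2_ge_half.
- exact: ent_fromA.
- have -> : L * ln 2 = ln n%:R by rewrite /L divfK // gt_eqF.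
  exact: ent_lower.
Qed.

Lemma diam_bound K a b : Aset K a -> Aset K b -> norm1 (a - b) <= 2 * K.
Proof.
move=> [a0 ha] [b0 hb].
have h1 := Hn_ge0 (co a) a0; have h2 := Hn_ge0 (co b) b0.
apply: (@le_trans _ _ (mass (co a) + mass (co b))); last by lra.
rewrite /norm1 /mass -big_split; apply: ler_sum => i _; rewrite !mxE.
have := a0 i; have := b0 i; rewrite /co => p q.
have hh : `|a ord0 i - b ord0 i| <= a ord0 i + b ord0 i by rewrite ler_norml; apply/andP; split; lra.
exact: hh.
Qed.

End Ent.

Theorem proposition4p3 (R : realType) (eps : R) (heps : 0 < eps < 2) :
  exists N : nat, forall n : nat, (N <= n)%N ->
    exists A : set 'rV[R]_n,
      approx_convex A /\
      (((log2 (n%:R : R) - eps)%:E <= hausdorff1 A (conv_hull A))%E) /\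
      ((diam1 A <= ((8 / eps + 1) * log2 (n%:R : R))%:E)%E).
Proof.
case/andP: heps => e0 e2.
exists 16%N => n n16.
have n0 : (0 < n)%N by apply: leq_trans n16.
rewrite /log2.
set L := ln (n%:R : R) / ln 2.
have l2 := @ln2_gt0 R.
have L4 : 4 <= L.
  rewrite /L ler_pdivlMr //.
  have -> : 4 * ln (2 : R) = ln (2 ^+ 4) by rewrite lnXn // mulr_natl.
  rewrite ler_ln ?posrE ?exprn_gt0 ?ltr0n //.
  by rewrite -natrX ler_nat.
have K0 : 0 <= L * (1 + 2 / eps) + 2.
  have : 0 <= 2 / eps by rewrite divr_ge0 // ltW.
  nra.
exists (Aset R n (L * (1 + 2 / eps) + 2)).
split; first exact: Aset_approx.
split.
  rewrite /hausdorff1 le_max; apply/orP; right.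
  apply: le_ereal_sup_tmp.
  exists (dist1 (ctr R n (L * (1 + 2 / eps) + 2)) (Aset R n (L * (1 + 2 / eps) + 2))).
    by exists (ctr R n (L * (1 + 2 / eps) + 2)) => //; exact: ctr_hull.
  apply: le_ereal_inf_tmp => y [a Aa <-]; rewrite lee_fin.
  exact: far.
apply: ge_ereal_sup => e [x [y [Ax [Ay ->]]]]; rewrite lee_fin.
apply: le_trans (@diam_bound R n _ x y Ax Ay) _.
set u := L / eps.
have eu : eps * u = L by rewrite /u mulrC divfK // gt_eqF.
have -> : L * (1 + 2 / eps) = L + 2 * u by rewrite /u; field; rewrite gt_eqF.
have -> : (8 / eps + 1) * L = 8 * u + L by rewrite /u; field; rewrite gt_eqF.
have u0 : 0 <= u by rewrite divr_ge0 ?ltW //; lra.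
nra.
Qed.
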